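(* Let $c,d\in\mathbb{N}$, $I=\mathbb{N}^d\times[c]$, and let $L\subseteq\mathbb{Z}^{(I)}$ be a $\mathrm{Sym}$-invariant lattice. Identify $\mathbb{Z}^{(\mathbb{N}^d\times[2c])}$ with $\mathbb{Z}^{(I)}\oplus\mathbb{Z}^{(I)}$ (basis vectors $\mathbf{e}_{\mathbf{i},j}$ with $j\le c$ spanning the first summand and $\mathbf{e}_{\mathbf{i},c+j}$ corresponding to $\mathbf{e}_{\mathbf{i},j}$ in the second summand), let $\varphi:\mathbb{Z}^{(\mathbb{N}^d\times[2c])}\to\mathbb{Z}^{(I)}$, $(\mathbf{u},\mathbf{v})\mapsto\mathbf{u}-\mathbf{v}$, and $M=\varphi^{-1}(L)\cap\mathbb{Z}_{\ge0}^{(\mathbb{N}^d\times[2c])}$. Then $M$ has a finite equivariant Hilbert basis if and only if $L$ has a finite equivariant Graver basis.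
   Context: $\mathbb{N}=\{1,2,\dots\}$. $\mathbb{Z}^{(J)}$ is the free abelian group with basis $J$, $\mathbb{Z}_{\ge0}^{(J)}$ its nonnegative vectors; lattice = subgroup. $\mathrm{Sym}$ is the group of permutations of $\mathbb{N}$ fixing all but finitely many points; it acts on $\mathbb{Z}^{(\mathbb{N}^d\times[k])}$ (any $k$) by linear extension of $\sigma(\mathbf{e}_{(i_1,\dots,i_d),j})=\mathbf{e}_{(\sigma(i_1),\dots,\sigma(i_d)),j}$. $\mathbf{u}\sqsubseteq\mathbf{v}$ iff $u_iv_i\ge0$ and $|u_i|\le|v_i|$ for all $i$; the Graver basis of $L$ is the set of $\sqsubseteq$-minimal elements of $L\setminus\{\mathbf{0}\}$; $\mathcal{G}$ is an equivariant Graver basis if $\mathrm{Sym}(\mathcal{G})=\{\sigma(\mathbf{g})\}$ is the Graver basis. A Hilbert basis of a monoid is a minimal generating set w.r.t. $\mathbb{Z}_{\ge0}$-combinations; $\mathcal{H}$ is an equivariant Hilbert basis of a $\mathrm{Sym}$-invariant monoid $M$ if $\mathrm{Sym}(\mathcal{H})$ is a Hilbert basis of $M$. *)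

(* Defs.v *)
From mathcomp Require Import all_boot all_order all_algebra.
Set Implicit Arguments. Unset Strict Implicit. Unset Printing Implicit Defensive.
Import Order.TTheory GRing.Theory Num.Theory.
Local Open Scope ring_scope.

(* Index set N^d x [k]; N is represented by nat (relabelled n |-> n-1),
   [k] by 'I_k (relabelled j |-> j-1). *)
Definition Idx (d k : nat) : Type := (d.-tuple nat * 'I_k)%type.

(* Vectors of Z^(J): integer-valued functions with finite support. *)
Definition vec (d k : nat) : Type := Idx d k -> int.

Definition finsupp (d k : nat) (v : vec d k) : Prop :=
  exists s : seq (Idx d k), forall x, v x != 0 -> x \in s.

Definition is_lattice (d k : nat) (L : vec d k -> Prop) : Prop :=
  (forall v, L v -> finsupp v) /\
  L (fun _ => 0) /\
  (forall u v, L u -> L v -> L (fun x => u x - v x)).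

Definition is_fperm (sigma tau : nat -> nat) : Prop :=
  cancel sigma tau /\ cancel tau sigma /\
  exists N : nat, forall n, (N <= n)%N -> sigma n = n.

(* Action of sigma (given via its inverse tau) on vectors:
   sigma(e_{(i1..id),j}) = e_{(sigma i1,..,sigma id),j}. *)
Definition act (d k : nat) (tau : nat -> nat) (v : vec d k) : vec d k :=
  fun x => v (map_tuple tau x.1, x.2).

Definition sym_invariant (d k : nat) (S : vec d k -> Prop) : Prop :=
  forall sigma tau, is_fperm sigma tau -> forall v, S v -> S (act tau v).

Definition sym_orbit (d k : nat) (G : vec d k -> Prop) (v : vec d k) : Prop :=
  exists sigma tau g, [/\ is_fperm sigma tau, G g & v = act tau g].

Definition conf_le (d k : nat) (u v : vec d k) : Prop :=
  forall x, 0 <= u x * v x /\ `|u x| <= `|v x|.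

Definition graver_basis (d k : nat) (L : vec d k -> Prop) (g : vec d k) : Prop :=
  [/\ L g, g <> (fun _ => 0) &
      forall u, L u -> u <> (fun _ => 0) -> conf_le u g -> u = g].

Definition has_finite_equivariant_graver_basis (d k : nat) (L : vec d k -> Prop)
  : Prop :=
  exists (n : nat) (G : 'I_n -> vec d k),
    forall v, graver_basis L v <-> sym_orbit (fun g => exists i, g = G i) v.

Definition nonneg_comb (d k : nat) (S : vec d k -> Prop) (v : vec d k) : Prop :=
  exists (n : nat) (h : 'I_n -> vec d k) (a : 'I_n -> nat),
    (forall i, S (h i)) /\ v = (fun x => \sum_(i < n) (a i)%:Z * h i x).

Definition generates (d k : nat) (S M : vec d k -> Prop) : Prop :=
  forall v, M v -> nonneg_comb S v.

Definition hilbert_basis (d k : nat) (H M : vec d k -> Prop) : Prop :=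
  [/\ (forall h, H h -> M h), generates H M &
      forall H' : vec d k -> Prop, (forall h, H' h -> H h) ->
        generates H' M -> forall h, H h -> H' h].

Definition has_finite_equivariant_hilbert_basis (d k : nat) (M : vec d k -> Prop)
  : Prop :=
  exists (n : nat) (H : 'I_n -> vec d k),
    hilbert_basis (sym_orbit (fun h => exists i, h = H i)) M.

Definition phi (d c : nat) (w : vec d (c + c)) : vec d c :=
  fun x => w (x.1, lshift c x.2) - w (x.1, rshift c x.2).

Definition monoidM (d c : nat) (L : vec d c -> Prop) (w : vec d (c + c)) : Prop :=
  [/\ finsupp w, (forall x, 0 <= w x) & L (phi w)].

(* Main.v *)
Require Import Defs.
From mathcomp Require Import all_boot all_order all_algebra zify.
From Stdlib Require Import Classical ClassicalEpsilon FunctionalExtensionality Lia.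
Set Implicit Arguments. Unset Strict Implicit. Unset Printing Implicit Defensive.
Import Order.TTheory GRing.Theory Num.Theory.
Local Open Scope ring_scope.
Definition dec (P : Prop) : bool := if excluded_middle_informative P then true else false.
Lemma decP P : reflect P (dec P).
Proof. rewrite /dec; case: excluded_middle_informative => h; by constructor. Qed.

Lemma fperm_sym s t : is_fperm s t -> is_fperm t s.
Proof.
case=> st [ts [N HN]]; split; [by [] | split; [by []|]].
exists N => n hn. by rewrite -{1}(HN n hn) st.
Qed.

Lemma map_tupleK (d : nat) (s t : nat -> nat) (x : d.-tuple nat) : cancel s t ->
  map_tuple t (map_tuple s x) = x.
Proof. move=> st; apply: val_inj => /=; exact: mapK. Qed.

Lemma actK d k (s t : nat -> nat) (v : vec d k) : cancel s t -> act s (act t v) = v.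
Proof.
move=> st; apply: functional_extensionality => x; rewrite /act /=.
by rewrite map_tupleK //; case: x.
Qed.

Lemma act_finsupp d k s t (v : vec d k) : is_fperm s t -> finsupp v -> finsupp (act t v).
Proof.
move=> [st [ts _]] [l Hl]; exists [seq (map_tuple s y.1, y.2) | y <- l] => x hx.
apply/mapP; exists (map_tuple t x.1, x.2); first exact: Hl.
by rewrite map_tupleK //; case: x {hx}.
Qed.

Definition vzero (d k : nat) : vec d k := fun _ => 0.
Arguments vzero : clear implicits.

Lemma act_zero d k t : act t (vzero d k) = vzero d k.
Proof. by []. Qed.

Lemma act_eq0 d k s t (v : vec d k) : is_fperm s t -> act t v = vzero d k -> v = vzero d k.
Proof. move=> [st _] h. by rewrite -(actK v st) h. Qed.

Lemma graver_inv d k (L : vec d k -> Prop) s t g : sym_invariant L -> is_fperm s t ->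
  graver_basis L g -> graver_basis L (act t g).
Proof.
move=> inv fp [Lg g0 gmin]; split; first exact: inv fp _ Lg.
  by move=> /(act_eq0 fp).
move=> u Lu u0 ule.
have fp' := fperm_sym fp.
have E : act s u = g.
  apply: gmin; first exact: inv _ _ fp' _ Lu.
  - by move=> /(act_eq0 fp').
  - case: fp => st [ts _] => x; have := ule (map_tuple s x.1, x.2).
    by rewrite /act /= map_tupleK //; case: x.
case: fp => st [ts _]; by rewrite -E actK.
Qed.

Definition swap (x y n : nat) : nat := if n == x then y else if n == y then x else n.

Lemma swapK x y : cancel (swap x y) (swap x y).
Proof. move=> n; rewrite /swap; do ! case: eqP; lia. Qed.

Lemma swap_id x y n : n <> x -> n <> y -> swap x y n = n.
Proof. by rewrite /swap => /eqP/negbTE -> /eqP/negbTE ->. Qed.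

Lemma norm_seq (s : seq nat) : exists sg tu, is_fperm sg tu /\
  exists q : seq nat, [/\ size q = size s, all (fun k => k < size s)%N q & s = map sg q].
Proof.
elim: s => [|a s [sg [tu [[st [ts [N hN]]] [q [sq aq es]]]]]].
  exists id, id; split; first by split; [by []| split; [by [] | by exists 0%N]].
  by exists [::].
subst s; rewrite size_map in aq *.
have aq' : all (fun k => k < (size q).+1)%N q.
  by apply: sub_all aq => k /=; lia.
case: (boolP (a \in map sg q)) => [/mapP [k kq ->]|na].
  exists sg, tu; split; first by split; [by []| split; [by [] | by exists N]].
  exists (k :: q); rewrite /= !size_map; split => //.
  rewrite aq' andbT; move/allP: aq => /(_ k kq); lia.
set m := size q.
exists (sg \o swap m (tu a)), (swap m (tu a) \o tu); split.
  split; [|split].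
  - by move=> n /=; rewrite st swapK.
  - by move=> n /=; rewrite swapK ts.
  - exists (maxn N (maxn m (tu a)).+1) => n hn /=.
    have h1 : n <> m by move: hn; rewrite /m; lia.
    have h2 : n <> tu a by move: hn; rewrite /m; lia.
    rewrite swap_id //; apply: hN; lia.
exists (m :: q); rewrite /= !size_map; split => //.
  by rewrite ltnSn aq'.
congr (_ :: _); first by rewrite /swap eqxx /= ts.
apply/eq_in_map => k kq /=; rewrite swap_id //.
  move/allP: aq => /(_ k kq); rewrite /m; lia.
move=> hk; move/negP: na; apply; rewrite -[a](ts a) -hk; exact: map_f.
Qed.

Lemma norm_tuple d (t : d.-tuple nat) : (0 < d)%N ->
  exists sg tu (p : d.-tuple 'I_d), is_fperm sg tu /\ t = map_tuple sg (map_tuple (@nat_of_ord d) p).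
Proof.
case: d t => [//|d] t _.
have [sg [tu [fp [q [sq aq eq]]]]] := norm_seq t.
rewrite size_tuple in sq aq.
have sz : size (map (@inord d) q) == d.+1 by rewrite size_map sq.
exists sg, tu, (Tuple sz); split => //; apply: val_inj => /=.
rewrite eq; congr map; rewrite -map_comp; apply/esym; apply: map_id_in => k kq /=.
by rewrite inordK //; move/allP: aq => /(_ k kq).
Qed.

Lemma latN d k (L : vec d k -> Prop) v : is_lattice L -> L v -> L (fun x => - v x).
Proof.
move=> [_ [L0 LB]] Lv; have := LB _ _ L0 Lv.
by have -> : (fun x => 0 - v x) = (fun x => - v x) by apply: functional_extensionality => x; rewrite sub0r.
Qed.

Lemma latD d k (L : vec d k -> Prop) u v : is_lattice L -> L u -> L v -> L (fun x => u x + v x).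
Proof.
move=> hL Lu Lv; have := (proj2 (proj2 hL)) _ _ Lu (latN hL Lv).
by have -> : (fun x => u x - - v x) = (fun x => u x + v x) by apply: functional_extensionality => x; rewrite opprK.
Qed.

Lemma conf_pt (u g : int) : (0 <= u * g /\ `|u| <= `|g|) <-> ((0 <= g -> 0 <= u <= g) /\ (g <= 0 -> g <= u <= 0)).
Proof. split.
- move=> [h1 h2]; split => h3; apply/andP; nia.
- move=> [h1 h2]; case: (lerP 0 g) => h.
  + move: (h1 h) => /andP [h4 h5]; split; nia.
  + have /andP [h4 h5] := h2 (ltW h); split; nia.
Qed.

Lemma conf_cases (u g : int) : 0 <= u * g /\ `|u| <= `|g| ->
  (0 <= g /\ 0 <= u /\ u <= g) \/ (g < 0 /\ g <= u /\ u <= 0).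
Proof.
move/conf_pt=> [h1 h2]; case: (lerP 0 g) => h.
- by left; move: (h1 h) => /andP [h4 h5].
- by right; have /andP [h4 h5] := h2 (ltW h).
Qed.

Definition pos (a : int) : int := if 0 <= a then a else 0.
Lemma pos_spec a : (0 <= a /\ pos a = a) \/ (a < 0 /\ pos a = 0).
Proof. rewrite /pos; case: (lerP 0 a) => h; [left|right]; by []. Qed.

Lemma pos2 a : (0 <= a /\ pos a = a /\ pos (- a) = 0) \/ (a < 0 /\ pos a = 0 /\ pos (- a) = - a).
Proof.
case: (pos_spec a) => [[h1 ->]|[h1 ->]]; case: (pos_spec (- a)) => [[h2 ->]|[h2 ->]].
all: try (by left); try (by right).
all: try lia.
Qed.


Lemma conf_refl d k (g : vec d k) : conf_le g g.
Proof. move=> x; split; [exact: mulr_ge0_le0 | by []] || (split; [rewrite -expr2; exact: sqr_ge0 | by []]). Qed.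

Lemma conf_trans d k (h u g : vec d k) : conf_le h u -> conf_le u g -> conf_le h g.
Proof.
move=> hu ug x; have := conf_cases (hu x); have := conf_cases (ug x).
move=> c1 c2; apply/conf_pt; split => hg; apply/andP; lia.
Qed.

Lemma sum_lt (T : eqType) (s : seq T) (f g : T -> nat) x0 :
  (forall x, x \in s -> (f x <= g x)%N) -> x0 \in s -> (f x0 < g x0)%N ->
  (\sum_(x <- s) f x < \sum_(x <- s) g x)%N.
Proof.
move=> le xs lt; rewrite (big_rem x0 xs) (big_rem x0 xs) /=.
rewrite -addSn leq_add // big_seq_cond [X in (_ <= X)%N]big_seq_cond.
apply: leq_sum => x /andP [hx _]; apply: le; exact: mem_rem hx.
Qed.

Definition mu d k (s : seq (Idx d k)) (v : vec d k) : nat := \sum_(x <- s) `|v x|%N.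

Lemma graver_below d k (L : vec d k -> Prop) : is_lattice L ->
  forall g, L g -> g <> vzero d k -> exists h, graver_basis L h /\ conf_le h g.
Proof.
move=> hL g Lg g0; have [s hs] := hL.1 _ Lg.
have [n lt] : exists n, (mu s g < n)%N by exists (mu s g).+1.
elim: n g Lg g0 hs lt => [//|n IH] g Lg g0 hs lt.
case: (classic (graver_basis L g)) => [gb|ngb]; first by exists g; split => //; exact: conf_refl.
have [u [Lu u0 ug une]] : exists u, [/\ L u, u <> vzero d k, conf_le u g & u <> g].
  apply: NNPP => hn; apply: ngb; split => // u Lu u0 ug.
  by apply: NNPP => une; apply: hn; exists u.
have [x0 hx0] : exists x, u x <> g x.
  apply: NNPP => hn; apply: une; apply: functional_extensionality => x.
  by apply: NNPP => hx; apply: hn; exists x.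
have [h [hh hu]] : exists h, graver_basis L h /\ conf_le h u.
  apply: IH => //.
  - move=> x hx; apply: hs; apply: contra hx => /eqP gx; apply/eqP.
    have := conf_cases (ug x); lia.
  - apply: (@leq_trans (mu s g)); last by rewrite -ltnS.
    apply: (@sum_lt _ s (fun x => `|u x|%N) (fun x => `|g x|%N) x0).
    + move=> x _; have := conf_cases (ug x); lia.
    + apply: hs; apply/eqP => gx; apply: hx0; have := conf_cases (ug x0); lia.
    + have := conf_cases (ug x0); lia.
by exists h; split => //; exact: conf_trans hu ug.
Qed.

Lemma comb0 d k (S : vec d k -> Prop) : nonneg_comb S (vzero d k).
Proof.
exists 0%N, (fun _ => vzero d k), (fun _ => 0%N); split; first by case.
by apply: functional_extensionality => x; rewrite big_ord0.
Qed.

Lemma comb_add d k (S : vec d k -> Prop) v h : nonneg_comb S v -> S h ->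
  nonneg_comb S (fun x => v x + h x).
Proof.
move=> [n [hs [a [Sh ->]]]] Sh0.
exists n.+1, (fun i => if unlift ord0 i is Some j then hs j else h),
  (fun i => if unlift ord0 i is Some j then a j else 1%N); split.
  by move=> i; case: (unlift ord0 i).
apply: functional_extensionality => x; rewrite big_ord_recl /= unlift_none addrC.
congr (_ + _); first by symmetry; exact: mul1r.
by apply: eq_bigr => i _; rewrite liftK.
Qed.

Section Mon.
Variables (c d : nat) (L : vec d c -> Prop).
Hypothesis hL : is_lattice L.
Hypothesis iL : sym_invariant L.

Local Notation M := (monoidM L).

Lemma phi_act t (w : vec d (c + c)) : phi (act t w) = act t (phi w).
Proof. by []. Qed.

Lemma M_inv s t w : is_fperm s t -> M w -> M (act t w).
Proof.
move=> fp [fw nw Lw]; split; first exact: act_finsupp fp fw.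
  by move=> x; apply: nw.
by rewrite phi_act; apply: iL fp _ Lw.
Qed.

Lemma Mnn w : M w -> forall X, 0 <= w X.
Proof. by case. Qed.

Definition Irr (w : vec d (c + c)) :=
  [/\ M w, w <> vzero d (c + c) &
   forall a b, M a -> M b -> w = (fun X => a X + b X) -> a = vzero d (c + c) \/ b = vzero d (c + c)].

Lemma Irr_inv s t w : is_fperm s t -> Irr w -> Irr (act t w).
Proof.
move=> fp [Mw w0 wi]; split; first exact: M_inv fp Mw.
  by move/(act_eq0 fp).
move=> a b Ma Mb E.
have fp' := fperm_sym fp.
have := wi (act s a) (act s b) (M_inv fp' Ma) (M_inv fp' Mb).
case: (fp) => st [ts _].
have E' : w = (fun X => act s a X + act s b X) by rewrite -{1}(actK w st) E.
move=> /(_ E') [] h; [left; by rewrite -(actK a ts) h | right; by rewrite -(actK b ts) h].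
Qed.

Lemma M_sub w h : M w -> M h -> (forall X, h X <= w X) -> M (fun X => w X - h X).
Proof.
move=> [[l fw] nw Lw] [_ nh Lh] le; split.
- exists l => X hX; apply: fw; apply: contra hX => /eqP wX; apply/eqP.
  have := le X; have := nh X; lia.
- by move=> X; rewrite subr_ge0.
- have := (proj2 (proj2 hL)) _ _ Lw Lh; congr L.
  apply: functional_extensionality => x; rewrite /phi /=; lia.
Qed.

Lemma irr_in (S : vec d (c + c) -> Prop) v : (forall h, S h -> M h) ->
  nonneg_comb S v -> Irr v -> S v.
Proof.
move=> SM [n [h [a [Sh ->]]]] [Mv v0 vi].
have [X hX] : exists X, \sum_(i < n) (a i)%:Z * h i X != 0.
  apply: NNPP => hn; apply: v0; apply: functional_extensionality => X; rewrite /vzero.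
  by apply/eqP; apply/negPn/negP => hX; apply: hn; exists X.
have [i hi] : exists i, (a i)%:Z * h i X != 0.
  apply: NNPP => hn; move: hX; rewrite big1 ?eqxx // => i _.
  by apply/eqP; apply/negPn/negP => hi; apply: hn; exists i.
have ai : (0 < a i)%N by move: hi; case: (a i) => //=; rewrite mul0r eqxx.
have hle : forall Y, h i Y <= \sum_(j < n) (a j)%:Z * h j Y.
  move=> Y; rewrite (bigD1 i) //=.
  have : 0 <= \sum_(j < n | j != i) (a j)%:Z * h j Y.
    apply: sumr_ge0 => j _; apply: mulr_ge0 => //; exact: Mnn (SM _ (Sh j)) _.
  have h1 : h i Y <= (a i)%:Z * h i Y.
    by apply: ler_peMl; [exact: Mnn (SM _ (Sh i)) Y | rewrite lez_nat].
  by move=> hs; apply: le_trans h1 _; rewrite lerDl.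
have := vi (h i) _ (SM _ (Sh i)) (M_sub Mv (SM _ (Sh i)) hle).
have E : (fun x => \sum_(i < n) (a i)%:Z * h i x) = (fun X => h i X + (\sum_(i < n) (a i)%:Z * h i X - h i X)).
  by apply: functional_extensionality => Y; rewrite addrC subrK.
case/(_ E) => [hi0|hb0].
  by move: hi; rewrite hi0 /vzero mulr0 eqxx.
have -> : (fun x => \sum_(i < n) (a i)%:Z * h i x) = h i; last exact: Sh.
apply: functional_extensionality => Y.
have := congr1 (fun f => f Y) hb0; rewrite /vzero /= => /eqP; rewrite subr_eq0 => /eqP //.
Qed.

Lemma split_lsh (j : 'I_c) : split (lshift c j) = inl j.
Proof. exact: (unsplitK (inl _ j)). Qed.
Lemma split_rsh (j : 'I_c) : split (rshift c j) = inr j.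
Proof. exact: (unsplitK (inr _ j)). Qed.

Lemma vecP (P : Idx d (c + c) -> Prop) :
  (forall t j, P (t, lshift c j)) -> (forall t j, P (t, rshift c j)) -> forall X, P X.
Proof. move=> hl hr [t k]; by case: (split_ordP k) => j ->. Qed.

Lemma vec_ext (u v : vec d (c + c)) :
  (forall t j, u (t, lshift c j) = v (t, lshift c j)) ->
  (forall t j, u (t, rshift c j) = v (t, rshift c j)) -> u = v.
Proof. move=> hl hr; apply: functional_extensionality; exact: vecP. Qed.

Definition gp (g : vec d c) : vec d (c + c) := fun X =>
  match split X.2 with inl j => pos (g (X.1, j)) | inr j => pos (- g (X.1, j)) end.

Lemma gp_l g t j : gp g (t, lshift c j) = pos (g (t, j)).
Proof. by rewrite /gp /= split_lsh. Qed.
Lemma gp_r g t j : gp g (t, rshift c j) = pos (- g (t, j)).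
Proof. by rewrite /gp /= split_rsh. Qed.

Lemma phi_gp g : phi (gp g) = g.
Proof.
apply: functional_extensionality => -[t j]; rewrite /phi /= gp_l gp_r.
case: (pos_spec (g (t, j))) => [[h ->]|[h ->]];
case: (pos_spec (- g (t, j))) => [[h' ->]|[h' ->]]; lia.
Qed.

Lemma gp_act t g : gp (act t g) = act t (gp g).
Proof. by []. Qed.

Lemma gp_nn g X : 0 <= gp g X.
Proof.
move: X; apply: vecP => t j.
  by rewrite gp_l; case: (pos_spec (g (t, j))) => [[h ->]|[h ->]].
by rewrite gp_r; case: (pos_spec (- g (t, j))) => [[h ->]|[h ->]].
Qed.

Lemma M_gp g : L g -> M (gp g).
Proof.
move=> Lg; split; last by rewrite phi_gp.
- have [l hl] := hL.1 _ Lg.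
  exists ([seq (y.1, lshift c y.2) | y <- l] ++ [seq (y.1, rshift c y.2) | y <- l]).
  apply: vecP => t j; rewrite ?gp_l ?gp_r => h; rewrite mem_cat; apply/orP;
    [left|right]; apply/mapP; exists (t, j) => //; apply: hl;
    apply: contra h => /eqP ->; by rewrite /pos lexx.
- exact: gp_nn.
Qed.

Lemma gp0 g : g <> vzero d c -> gp g <> vzero d (c + c).
Proof. by move=> h0 h; apply: h0; rewrite -(phi_gp g) h. Qed.

Definition vle (u v : vec d (c + c)) := forall X, u X <= v X.

Lemma gp_le h u w : conf_le h u -> vle (gp u) w -> vle (gp h) w.
Proof.
move=> hu uw; apply: vecP => t j; have := conf_cases (hu (t, j)).
  move: (uw (t, lshift c j)); rewrite !gp_l.
  case: (pos_spec (h (t, j))) => [[h1 ->]|[h1 ->]];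
  case: (pos_spec (u (t, j))) => [[h2 ->]|[h2 ->]]; lia.
move: (uw (t, rshift c j)); rewrite !gp_r.
case: (pos_spec (- h (t, j))) => [[h1 ->]|[h1 ->]];
case: (pos_spec (- u (t, j))) => [[h2 ->]|[h2 ->]]; lia.
Qed.

Lemma gp_dec g a b : M a -> M b -> gp g = (fun X => a X + b X) -> forall t j,
  [/\ 0 <= a (t, lshift c j), 0 <= a (t, rshift c j), 0 <= b (t, lshift c j), 0 <= b (t, rshift c j) &
   a (t, lshift c j) + b (t, lshift c j) = pos (g (t, j)) /\
   a (t, rshift c j) + b (t, rshift c j) = pos (- g (t, j))].
Proof.
move=> Ma Mb E t j; split; try exact: Mnn.
split; [by rewrite -gp_l E | by rewrite -gp_r E].
Qed.

Lemma gp_dec' g a b : M a -> M b -> gp g = (fun X => a X + b X) -> forall t j,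
  exists al ar bl br gg : int,
  [/\ a (t, lshift c j) = al, a (t, rshift c j) = ar, b (t, lshift c j) = bl,
      b (t, rshift c j) = br &
   [/\ g (t, j) = gg, 0 <= al, 0 <= ar, 0 <= bl &
   0 <= br /\ ((0 <= gg /\ al + bl = gg /\ ar + br = 0) \/ (gg < 0 /\ al + bl = 0 /\ ar + br = - gg))]].
Proof.
move=> Ma Mb E t j; have [h1 h2 h3 h4 [h5 h6]] := gp_dec Ma Mb E t j.
exists (a (t, lshift c j)), (a (t, rshift c j)), (b (t, lshift c j)), (b (t, rshift c j)), (g (t, j)).
split => //; split => //; split => //.
by case: (pos2 (g (t, j))) => [[k1 [k2 k3]]|[k1 [k2 k3]]]; [left|right]; rewrite h5 h6 k2 k3.
Qed.

Ltac atoms D t j :=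
  let al := fresh "al" in let ar := fresh "ar" in let bl := fresh "bl" in let br := fresh "br" in
  let gg := fresh "gg" in
  let e1 := fresh "e" in let e2 := fresh "e" in let e3 := fresh "e" in let e4 := fresh "e" in let e5 := fresh "e" in
  let f1 := fresh "f" in let f2 := fresh "f" in let f3 := fresh "f" in let f4 := fresh "f" in let f5 := fresh "f" in
  destruct (D t j) as [al [ar [bl [br [gg [e1 e2 e3 e4 [e5 f1 f2 f3 [f4 f5]]]]]]]];
  rewrite ?e1 ?e2 ?e3 ?e4 ?e5; try (split; intro; apply/andP); lia.

Lemma gp_irr g : graver_basis L g -> Irr (gp g).
Proof.
move=> [Lg g0 gmin]; split; [exact: M_gp | exact: gp0 |].
move=> a b Ma Mb E.
have D := gp_dec' Ma Mb E.
have Lu : L (phi a) by case: Ma.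
have cu : conf_le (phi a) g.
  move=> [t j]; apply/conf_pt; rewrite /phi /=.
  atoms D t j.
case: (classic (phi a = vzero d c)) => [u0|u0].
- left; apply: vec_ext => t j; have := congr1 (fun f => f (t, j)) u0;
  rewrite /phi /vzero /=; atoms D t j.
- right; have ug := gmin _ Lu u0 cu.
  apply: vec_ext => t j; have := congr1 (fun f => f (t, j)) ug;
  rewrite /phi /vzero /=; atoms D t j.
Qed.

Definition ex (z : Idx d c) : vec d c := fun x => (x == z)%:Z.
Definition diag (z : Idx d c) : vec d (c + c) := fun X =>
  ((X.1 == z.1) && ((X.2 == lshift c z.2) || (X.2 == rshift c z.2)))%:Z.

Lemma diag_l z t j : diag z (t, lshift c j) = ((t, j) == z)%:Z.
Proof. by case: z => tz jz; rewrite /diag /= eq_lrshift orbF eq_lshift. Qed.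
Lemma diag_r z t j : diag z (t, rshift c j) = ((t, j) == z)%:Z.
Proof. by case: z => tz jz; rewrite /diag /= eq_rlshift eq_rshift. Qed.

Lemma phi_diag z : phi (diag z) = vzero d c.
Proof. apply: functional_extensionality => -[t j]; by rewrite /phi /= diag_l diag_r subrr. Qed.

Lemma M_diag z : M (diag z).
Proof.
split; last by rewrite phi_diag; exact: hL.2.1.
- exists [:: (z.1, lshift c z.2); (z.1, rshift c z.2)]; apply: vecP => t j;
  rewrite ?diag_l ?diag_r; case: ((t, j) =P z) => [<-|] //= _; by rewrite !inE eqxx ?orbT.
- by move=> X; rewrite /diag.
Qed.

Lemma diag0 z : diag z <> vzero d (c + c).
Proof.
move=> h; have := congr1 (fun f => f (z.1, lshift c z.2)) h.
by rewrite diag_l /vzero -surjective_pairing eqxx.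
Qed.

Lemma diag_dec z a b : M a -> M b -> diag z = (fun X => a X + b X) -> forall t j,
  exists al ar bl br : int,
  [/\ a (t, lshift c j) = al, a (t, rshift c j) = ar, b (t, lshift c j) = bl,
      b (t, rshift c j) = br &
   [/\ 0 <= al, 0 <= ar, 0 <= bl, 0 <= br &
    ((t, j) = z /\ al + bl = 1 /\ ar + br = 1) \/ ((t, j) <> z /\ al + bl = 0 /\ ar + br = 0)]].
Proof.
move=> Ma Mb E t j.
exists (a (t, lshift c j)), (a (t, rshift c j)), (b (t, lshift c j)), (b (t, rshift c j)).
split => //; split; try exact: Mnn.
have h1 : a (t, lshift c j) + b (t, lshift c j) = ((t, j) == z)%:Z by rewrite -diag_l E.
have h2 : a (t, rshift c j) + b (t, rshift c j) = ((t, j) == z)%:Z by rewrite -diag_r E.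
by case: eqP h1 h2 => [->|ne] -> ->; [left|right].
Qed.

Ltac datoms D t j :=
  let al := fresh "al" in let ar := fresh "ar" in let bl := fresh "bl" in let br := fresh "br" in
  let e1 := fresh "e" in let e2 := fresh "e" in let e3 := fresh "e" in let e4 := fresh "e" in
  let f1 := fresh "f" in let f2 := fresh "f" in let f3 := fresh "f" in let f4 := fresh "f" in
  let f5 := fresh "f" in
  destruct (D t j) as [al [ar [bl [br [e1 e2 e3 e4 [f1 f2 f3 f4 f5]]]]]];
  rewrite ?e1 ?e2 ?e3 ?e4; revert f5.

Lemma diag_irr z : ~ L (ex z) -> Irr (diag z).
Proof.
move=> nL; split; [exact: M_diag | exact: diag0 |].
move=> a b Ma Mb E; have D := diag_dec Ma Mb E.
have [al0 [ar0 [bl0 [br0 [e1 e2 e3 e4 [f1 f2 f3 f4 [[_ [f5 f6]]|[f5 _]]]]]]]] := D z.1 z.2; last first.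
  by case: f5; rewrite -surjective_pairing.
have Pa : phi a = fun x => (al0 - ar0) * ex z x.
  apply: functional_extensionality => -[t j]; rewrite /phi /ex /=.
  case: eqP => [hz|ne].
    by move: e1 e2; rewrite -hz /= => -> ->; rewrite mulr1.
  datoms D t j; case=> [[hz _]|[_ [g1 g2]]]; first by case: ne.
  rewrite mulr0; lia.
have Lp : L (phi a) by case: Ma.
have : al0 = ar0.
  apply: NNPP => hne; apply: nL.
  have [h|h] : al0 - ar0 = 1 \/ al0 - ar0 = -1 by lia.
  - have -> : ex z = phi a by rewrite Pa h; apply: functional_extensionality => x; rewrite mul1r.
    exact: Lp.
  - have -> : ex z = (fun x => - phi a x).
      by rewrite Pa h; apply: functional_extensionality => x; rewrite mulN1r opprK.
    exact: latN.
move=> eq; have [k|k] : al0 = 0 \/ al0 = 1 by lia.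
- left; apply: vec_ext => t j; rewrite /vzero; (case: ((t, j) =P z) => [hz|ne];
    [subst z; move: e1 e2 => /= e1 e2; rewrite ?e1 ?e2; lia
    |datoms D t j; case=> [[hz _]|[_ [g1 g2]]]; [by case: ne| lia]]).
- right; apply: vec_ext => t j; rewrite /vzero; (case: ((t, j) =P z) => [hz|ne];
    [subst z; move: e3 e4 => /= e3 e4; rewrite ?e3 ?e4; lia
    |datoms D t j; case=> [[hz _]|[_ [g1 g2]]]; [by case: ne| lia]]).
Qed.

Lemma ex0 z : ex z <> vzero d c.
Proof. move=> h; have := congr1 (fun f => f z) h; by rewrite /ex /vzero eqxx. Qed.

Lemma ex_graver z : L (ex z) -> graver_basis L (ex z).
Proof.
move=> Lz; split => //; first exact: ex0.
move=> u Lu u0 uz.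
have [x hx] : exists x, u x != 0.
  apply: NNPP => hn; apply: u0; apply: functional_extensionality => x.
  by apply/eqP; apply/negPn/negP => hx; apply: hn; exists x.
have hxz : x = z.
  apply: NNPP => ne; move: hx; have := conf_cases (uz x); rewrite /ex.
  have -> : (x == z) = false by apply/eqP.
  move=> /= H /eqP; lia.
apply: functional_extensionality => y; have := conf_cases (uz y); rewrite /ex.
case: eqP => [->|ne] /= H; last lia.
by move: hx; rewrite hxz => /eqP; lia.
Qed.

Lemma vle_refl w : vle w w.
Proof. by []. Qed.

Lemma key w : M w -> w <> vzero d (c + c) -> exists h, [/\ h <> vzero d (c + c), vle h w &
  (exists g, graver_basis L g /\ h = gp g) \/ (exists z, ~ L (ex z) /\ h = diag z)].
Proof.
move=> Mw w0; have Lg : L (phi w) by case: Mw.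
have nw := Mnn Mw.
case: (classic (phi w = vzero d c)) => [g0|g0]; last first.
  have [h [hh hu]] := graver_below hL Lg g0.
  exists (gp h); split; [by apply: gp0; case: hh | | by left; exists h].
  - apply: gp_le hu _; apply: vecP => t j; rewrite ?gp_l ?gp_r /phi /=;
    have := nw (t, lshift c j); have := nw (t, rshift c j);
    set p := w (t, lshift c j); set q := w (t, rshift c j).
    + by case: (pos_spec (p - q)) => [[k ->]|[k ->]]; lia.
    + by case: (pos_spec (- (p - q))) => [[k ->]|[k ->]]; lia.
have [X hX] : exists X, w X != 0.
  apply: NNPP => hn; apply: w0; apply: functional_extensionality => x.
  by apply/eqP; apply/negPn/negP => hx; apply: hn; exists x.
have [t [j [hl hr]]] : exists t j, 0 < w (t, lshift c j) /\ 0 < w (t, rshift c j).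
  case: X hX => t k; case: (split_ordP k) => j -> hX; exists t, j;
  have := congr1 (fun f => f (t, j)) g0; rewrite /phi /vzero /= => E;
  have := nw (t, lshift c j); have := nw (t, rshift c j); move: hX => /eqP; lia.
case: (classic (L (ex (t, j)))) => [Lz|nLz].
- exists (gp (ex (t, j))); split; [exact: gp0 (@ex0 _) | | by left; exists (ex (t, j)); split => //; exact: ex_graver].
  apply: vecP => t' j'; rewrite ?gp_l ?gp_r /ex.
  + by case: eqP => [[-> ->]|_]; rewrite /pos /= ?lexx; [lia | exact: nw].
  + by case: eqP => [[-> ->]|_]; rewrite /pos /=; exact: nw.
- exists (diag (t, j)); split; [exact: diag0 | | by right; exists (t, j)].
  apply: vecP => t' j'; rewrite ?diag_l ?diag_r;
  (case: eqP => [[-> ->]|_]; [rewrite /=; lia | exact: nw]).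
Qed.

Lemma gen (S : vec d (c + c) -> Prop) :
  (forall g, graver_basis L g -> S (gp g)) -> (forall z, ~ L (ex z) -> S (diag z)) ->
  forall w, M w -> nonneg_comb S w.
Proof.
move=> Sg Sd w Mw; case: (Mw) => [[s hs] _ _].
have [n lt] : exists n, (mu s w < n)%N by exists (mu s w).+1.
elim: n w Mw hs lt => [//|n IH] w Mw hs lt.
case: (classic (w = vzero d (c + c))) => [->|w0]; first exact: comb0.
have [h [h0 hw hS]] := key Mw w0.
have Mh : M h.
  by case: hS => [[g [gb ->]]|[z [_ ->]]]; [apply: M_gp; case: gb | exact: M_diag].
have Sh : S h by case: hS => [[g [gb ->]]|[z [nz ->]]]; [exact: Sg | exact: Sd].
have nh := Mnn Mh; have nw := Mnn Mw.
have -> : w = (fun X => (fun Y => w Y - h Y) X + h X).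
  by apply: functional_extensionality => X; rewrite subrK.
apply: comb_add => //; apply: IH.
- exact: M_sub.
- move=> X hX; apply: hs; apply: contra hX => /eqP wX; apply/eqP.
  have := hw X; have := nh X; lia.
- have [X0 hX0] : exists X, h X != 0.
    apply: NNPP => hn; apply: h0; apply: functional_extensionality => x.
    by apply/eqP; apply/negPn/negP => hx; apply: hn; exists x.
  apply: (@leq_trans (mu s w)); last by rewrite -ltnS.
  apply: (@sum_lt _ s (fun x => `|w x - h x|%N) (fun x => `|w x|%N) X0).
  + move=> x _; have := hw x; have := nh x; have := nw x; lia.
  + apply: hs; have := hw X0; have := nh X0; move: hX0 => /eqP; move=> ? ? ?.
    apply/eqP; lia.
  + have := hw X0; have := nh X0; have := nw X0; move: hX0 => /eqP; lia.
Qed.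

Lemma map_tuple_eq (s t : nat -> nat) (x y : d.-tuple nat) : is_fperm s t ->
  (map_tuple t x == y) = (x == map_tuple s y).
Proof.
move=> [st [ts _]]; apply/eqP/eqP => [<-|->]; by rewrite map_tupleK.
Qed.

Lemma act_diag s t z : is_fperm s t -> act t (diag z) = diag (map_tuple s z.1, z.2).
Proof.
move=> fp; apply: functional_extensionality => X; rewrite /act /diag /=.
by rewrite (map_tuple_eq _ _ fp).
Qed.

Lemma act_ex s t z : is_fperm s t -> act t (ex z) = ex (map_tuple s z.1, z.2).
Proof.
move=> fp; apply: functional_extensionality => -[x j]; rewrite /act /ex /=.
case: z => z1 z2 /=; by rewrite !xpair_eqE (map_tuple_eq _ _ fp).
Qed.

Lemma idperm : is_fperm id id.
Proof. by split; [by []| split; [by [] | by exists 0%N]]. Qed.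

Lemma act_id (v : vec d c) : act id v = v.
Proof.
apply: functional_extensionality => -[x j]; rewrite /act /=; congr v; congr pair.
by apply: val_inj; rewrite /= map_id.
Qed.

Lemma hilb_to_graver : has_finite_equivariant_hilbert_basis M -> has_finite_equivariant_graver_basis L.
Proof.
move=> [n [H [HM Hgen Hmin]]].
set ds := [seq i <- enum 'I_n | dec (graver_basis L (phi (H i)))].
exists (size ds), (fun k => phi (H (tnth (in_tuple ds) k))) => v; split.
- move=> gv.
  have : sym_orbit (fun h => exists i, h = H i) (gp v).
    apply: irr_in => //; first exact: Hgen (M_gp (let: And3 a _ _ := gv in a)).
    exact: gp_irr.
  move=> [s [t [h [fp [i ->] E]]]].
  have fp' := fperm_sym fp.
  have Hi : H i = act s (gp v) by rewrite E; case: fp => st _; rewrite actK.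
  have gi : graver_basis L (phi (H i)) by rewrite Hi phi_act phi_gp; exact: graver_inv iL fp' gv.
  have : i \in in_tuple ds by rewrite mem_filter mem_enum andbT; apply/decP.
  move=> /tnthP [k ik]; exists s, t, (phi (H i)); split => //; first by exists k; rewrite ik.
  by rewrite Hi phi_act phi_gp; case: fp => st [ts _]; rewrite actK.
- move=> [s [t [g [fp [k ->] ->]]]]; apply: graver_inv iL fp _.
  have : tnth (in_tuple ds) k \in ds by exact: mem_tnth.
  by rewrite mem_filter => /andP [/decP].
Qed.

Definition Dt := (d.-tuple 'I_d * 'I_c)%type.
Definition toI (y : Dt) : Idx d c := (map_tuple (@nat_of_ord d) y.1, y.2).

Lemma graver_to_hilb : (0 < d)%N -> has_finite_equivariant_graver_basis L -> has_finite_equivariant_hilbert_basis M.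
Proof.
move=> d0 [n [G HG]].
set ds := [seq y <- enum [set: (d.-tuple 'I_d * 'I_c)%type] | ~~ dec (L (ex (toI y)))].
pose H (k : 'I_(n + size ds)) := match split k with
  | inl i => gp (G i) | inr k' => diag (toI (tnth (in_tuple ds) k')) end.
have HGi : forall i, graver_basis L (G i).
  move=> i; apply/HG; exists id, id, (G i); split; [exact: idperm | by exists i | by rewrite act_id].
have IrrH : forall k, Irr (H k).
  move=> k; rewrite /H; case: (split k) => [i|k'].
    exact: gp_irr.
  apply: diag_irr; have : tnth (in_tuple ds) k' \in ds by exact: mem_tnth.
  by rewrite mem_filter => /andP [/decP].
set O := sym_orbit (fun h => exists i, h = H i).
have OI : forall h, O h -> Irr h.
  move=> h [s [t [h' [fp [k ->] ->]]]]; exact: Irr_inv fp (IrrH k).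
have OM : forall h, O h -> M h by move=> h /OI [].
exists (n + size ds), H; split => //.
- apply: gen.
  + move=> g /HG [s [t [g' [fp [i ->] ->]]]].
    exists s, t, (H (lshift _ i)); split => //; first by exists (lshift _ i).
    by rewrite /H (unsplitK (inl _ i)).
  + move=> [tz j] nz.
    have [sg [tu [p [fp ep]]]] := norm_tuple tz d0.
    have ey : ex (tz, j) = act tu (ex (toI (p, j))) by rewrite (act_ex _ fp) /toI /= ep.
    have yds : (p, j) \in in_tuple ds.
      rewrite mem_filter mem_enum in_setT andbT; apply/negP => /decP Ly; apply: nz.
      by rewrite ey; exact: iL fp _ Ly.
    have /tnthP [k' ek] := yds.
    exists sg, tu, (H (rshift _ k')); split => //; first by exists (rshift _ k').
    by rewrite /H (unsplitK (inr _ k')) /= -ek (act_diag _ fp) /toI /= ep.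
- move=> H' H'O H'gen h Oh.
  apply: irr_in; [by move=> x /H'O /OM | exact: H'gen (OM _ Oh) | exact: OI].
Qed.
End Mon.

Theorem corollary4p12 (c d : nat) (L : vec d c -> Prop) :
  (0 < c)%N -> (0 < d)%N ->
  is_lattice L -> sym_invariant L ->
  has_finite_equivariant_hilbert_basis (monoidM L) <->
  has_finite_equivariant_graver_basis L.
Proof.
move=> _ d0 hL iL; split; [exact: hilb_to_graver | exact: graver_to_hilb].
Qed.
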